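(* Consider an instance of $k$-robust Steiner forest on an undirected graph $G=(V,E)$ with edge costs $c$ and pair set $U\subseteq V\times V$, a threshold $T\ge0$, and constants $\beta,\gamma>0$ with $\gamma\le\beta/2$. Run the following procedure: start with $S_r=S_f=W=\emptyset$; while there is a pair $(s,t)\in U$ with $d_{G/(S_r\cup S_f)}(s,t)>\beta\frac{T}{k}$, add $(s,t)$ to $S_r$; then, if $d_G(s,w)<\gamma\frac{T}{k}$ for some $w\in W$, add $(s,w)$ to $S_f$ for such a $w$, else add $s$ to $W$; then, if $d_G(t,w')<\gamma\frac Tk$ for some $w'\in W$, add $(t,w')$ to $S_f$ for such a $w'$, else add $t$ to $W$. At termination, $|W|\ge|S_r|\ge|S_f|$.
   Context: $d_G$ is the shortest-path distance in $G$ under edge costs $c$. For a set of vertex pairs $S$, $G/S$ is the graph obtained by identifying the two vertices of each pair in $S$, and $d_{G/S}$ is its shortest-path distance. *)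

(* Defs.v *)
From HB Require Import structures.
From mathcomp Require Import all_boot all_order all_algebra.
From mathcomp Require Import classical_sets reals constructive_ereal ereal.
Set Implicit Arguments. Unset Strict Implicit. Unset Printing Implicit Defensive.
Import Order.TTheory GRing.Theory Num.Theory.
Local Open Scope ring_scope.
Local Open Scope classical_set_scope.

Section Graph.
Variables (R : realType) (V : finType).
(* An undirected graph G = (V,E) with edge costs c: an edge {u,v} is stored as
   an ordered pair (u,v) in E and may be traversed in both directions. *)
Variables (E : {set V * V}) (c : V * V -> R).

(* One step of a walk in G/S, from u to v, of cost r: either an edge of G
   (either orientation) with its cost, or a pair of S, whose two vertices are
   identified in G/S (cost 0). *)
Definition gstep (S : {set V * V}) (u v : V) (r : R) : Prop :=
  ((u, v) \in E /\ r = c (u, v)) \/ ((v, u) \in E /\ r = c (v, u)) \/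
  (((u, v) \in S \/ (v, u) \in S) /\ r = 0).

Inductive walk (S : {set V * V}) : V -> V -> R -> Prop :=
| walk_nil x : walk S x x 0
| walk_cons x y z r r' : gstep S x y r -> walk S y z r' -> walk S x z (r + r').

(* d_{G/S}(x,y): shortest-path distance in G/S (+oo if no walk). *)
Definition dist (S : {set V * V}) (x y : V) : \bar R :=
  ereal_inf [set (r%:E)%E | r in [set r | walk S x y r]].

Definition distG (x y : V) : \bar R := dist finset.set0 x y.

Definition state := ({set V * V} * {set V * V} * {set V})%type.

Definition process (rad : R) (v : V) (Sf : {set V * V}) (W : {set V})
    (Sf' : {set V * V}) (W' : {set V}) : Prop :=
  (exists2 w, w \in W & ((distG v w < rad%:E)%E /\ Sf' = (v, w) |: Sf /\ W' = W))
  \/ ((forall w, w \in W -> ~ (distG v w < rad%:E)%E) /\ Sf' = Sf /\ W' = v |: W).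

Definition rs_step (U : {set V * V}) (beta gamma T : R) (k : nat)
    (st st' : state) : Prop :=
  let: (Sr, Sf, W) := st in
  let: (Sr', Sf', W') := st' in
  exists s t, [/\ (s, t) \in U,
    ((beta * (T / k%:R))%:E < dist (Sr :|: Sf) s t)%E,
    Sr' = (s, t) |: Sr &
    exists Sf1 W1, process (gamma * (T / k%:R)) s Sf W Sf1 W1 /\
                   process (gamma * (T / k%:R)) t Sf1 W1 Sf' W'].

Inductive rs_reach (U : {set V * V}) (beta gamma T : R) (k : nat) : state -> Prop :=
| rs_init : rs_reach U beta gamma T k (finset.set0, finset.set0, finset.set0)
| rs_next st st' : rs_reach U beta gamma T k st -> rs_step U beta gamma T k st st' ->
    rs_reach U beta gamma T k st'.

Definition rs_terminal (U : {set V * V}) (beta T : R) (k : nat) (st : state) : Prop :=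
  let: (Sr, Sf, W) := st in
  forall s t, (s, t) \in U ->
    ~ ((beta * (T / k%:R))%:E < dist (Sr :|: Sf) s t)%E.

End Graph.

(* Main.v *)
Require Import Defs.
From HB Require Import structures.
From mathcomp Require Import all_boot all_order all_algebra.
From mathcomp Require Import classical_sets reals constructive_ereal ereal.
From mathcomp Require Import zify lra.
Import Order.TTheory GRing.Theory Num.Theory.
Set Implicit Arguments. Unset Strict Implicit.
Local Open Scope ring_scope.

Section Aux.
Variables (R : realType) (V : finType) (E : {set V * V}) (c : V * V -> R).

Lemma walk_eq (S : {set V * V}) x y r r' : walk E c S x y r -> r = r' -> walk E c S x y r'.
Proof. by move=> h <-. Qed.

Lemma walk_step (S : {set V * V}) x y r : gstep E c S x y r -> walk E c S x y r.
Proof. move=> h; apply: (walk_eq (walk_cons h (walk_nil _ _ _ _))); by rewrite addr0. Qed.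

Lemma walk_cat (S : {set V * V}) x y z r r' : walk E c S x y r -> walk E c S y z r' ->
  walk E c S x z (r + r').
Proof.
elim=> [a|a b d r1 r2 hs hw IH] h2; first by apply: (walk_eq h2); rewrite add0r.
apply: (walk_eq (walk_cons hs (IH h2))); by rewrite addrA.
Qed.

Lemma gstep_rev (S : {set V * V}) x y r : gstep E c S x y r -> gstep E c S y x r.
Proof. by rewrite /gstep; intuition. Qed.

Lemma walk_cat0 (S : {set V * V}) x y z : walk E c S x y 0 -> walk E c S y z 0 ->
  walk E c S x z 0.
Proof. by move=> h1 h2; apply: (walk_eq (walk_cat h1 h2)); rewrite addr0. Qed.

Lemma walk_rev (S : {set V * V}) x y r : walk E c S x y r -> walk E c S y x r.
Proof.
elim=> [a|a b d r1 r2 hs hw IH]; first exact: walk_nil.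
apply: (walk_eq (walk_cat IH (walk_step (gstep_rev hs)))); by rewrite addrC.
Qed.

Lemma walk_mono (S S' : {set V * V}) x y r : S \subset S' -> walk E c S x y r -> walk E c S' x y r.
Proof.
move=> sub; elim=> [a|a b d r1 r2 hs hw IH]; first exact: walk_nil.
apply: (walk_cons _ IH); move: hs; rewrite /gstep.
have H1 := fintype.subsetP sub (a, b); have H2 := fintype.subsetP sub (b, a). intuition.
Qed.

Lemma walk0_ge0 x y r : (forall e, e \in E -> 0 <= c e) ->
  walk E c finset.set0 x y r -> 0 <= r.
Proof.
move=> cge; elim=> // a b d r1 r2 hs hw IH; apply: addr_ge0 => //.
move: hs; rewrite /gstep !inE; case=> [[h ->]|[[h ->]|[[//|//] _]]]; exact: cge.
Qed.

Lemma dist_le (S : {set V * V}) x y r : walk E c S x y r -> (dist E c S x y <= r%:E)%E.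
Proof. by move=> h; apply: ereal_inf_lbound; exists r. Qed.

Lemma process_spec rad v (Sf : {set V * V}) (W : {set V}) Sf' W' : 0 <= rad ->
  process E c rad v Sf W Sf' W' ->
  exists e, [/\ e \in W', (W \subset W' /\ Sf \subset Sf'),
    (e = v \/ (v, e) \in Sf'),
    (exists2 r, walk E c finset.set0 v e r & r <= rad) &
    (#|Sf'| + #|W'| <= #|Sf| + #|W| + 1)%N].
Proof.
move=> rad0 [[w wW [hd [-> ->]]]|[_ [-> ->]]].
- exists w; split => //; first by split => //; exact: finset.subsetUr.
  + by right; rewrite !inE eqxx.
  + case: (ereal_inf_lt hd) => y [r hr <-]; rewrite lte_fin => lt.
    by exists r => //; apply: ltW.
  + rewrite cardsU1; case: (_ \notin _) => /=; lia.
- exists v; split => //; first by rewrite !inE eqxx.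
  + by split => //; exact: finset.subsetUr.
  + by left.
  + by exists 0 => //; apply: walk_nil.
  + rewrite cardsU1; case: (_ \notin _) => /=; lia.
Qed.

Lemma arith (r0 K0 w0 f0 fm wm f1 w1 K1 d i a n r1 : nat) :
  (r0 + K0 <= w0)%N -> (f0 + K0 <= r0)%N -> (fm + wm <= f0 + w0 + 1)%N ->
  (f1 + w1 <= fm + wm + 1)%N -> (K1 <= 1 + d)%N -> (2 <= i)%N -> (i + d)%N = a ->
  (a <= K0 + n)%N -> (w0 + n)%N = w1 -> r1 = (r0 + 1)%N ->
  (r1 + K1 <= w1)%N /\ (f1 + K1 <= r1)%N.
Proof. move=> *; split; lia. Qed.

Definition inv (st : state V) : Prop :=
  let: (Sr, Sf, W) := st in
  exists L : V -> V,
    [/\ (forall x y, L x = L y -> walk E c (Sr :|: Sf) x y 0),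
        (#|Sr| + #|L @: W| <= #|W|)%N &
        (#|Sf| + #|L @: W| <= #|Sr|)%N].

End Aux.

Theorem mainTheorem15 (R : realType) (V : finType) (E : {set V * V})
  (c : V * V -> R) (U : {set V * V}) (k : nat) (T beta gamma : R)
  (c_ge0 : forall e, e \in E -> 0 <= c e)
  (k_gt0 : (0 < k)%N) (T_ge0 : 0 <= T)
  (beta_gt0 : 0 < beta) (gamma_gt0 : 0 < gamma) (gamma_le : gamma <= beta / 2)
  (Sr Sf : {set V * V}) (W : {set V}) :
  rs_reach E c U beta gamma T k (Sr, Sf, W) ->
  rs_terminal E c U beta T k (Sr, Sf, W) ->
  (#|Sr| <= #|W|)%N /\ (#|Sf| <= #|Sr|)%N.
Proof.
move=> hr _.
have q0 : 0 <= T / k%:R by apply: divr_ge0 => //; apply: ler0n.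
have g0 : 0 <= gamma * (T / k%:R) by apply: mulr_ge0 => //; apply: ltW.
have gb : gamma * (T / k%:R) + gamma * (T / k%:R) <= beta * (T / k%:R).
  rewrite -mulrDl; apply: ler_wpM2r => //.
  have : gamma * 2 <= beta by rewrite -ler_pdivlMr //.
  by rewrite mulrDr mulr1.
suff : inv E c (Sr, Sf, W).
  by case=> L [_ h1 h2]; split; lia.
move: hr; set st := (Sr, Sf, W); clearbody st.
elim=> [|[[Sr0 Sf0] W0] [[Sr1 Sf1] W1] _ IH hs].
  exists id; split => //.
  - by move=> x y ->; apply: walk_nil.
  - by rewrite imset0 !cards0.
  - by rewrite imset0 !cards0.
case: IH => L [I1 I2 I3].
case: hs => s [t [hU hd eSr [Sfm [Wm [p1 p2]]]]].
set g := gamma * (T / k%:R) in p1 p2 g0 gb.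
set H := Sr0 :|: Sf0.
have nowalk : forall r, walk E c H s t r -> r <= beta * (T / k%:R) -> False.
  move=> r hw hle; have := dist_le hw.
  move: hd; rewrite -/H => hd hle2.
  have := lt_le_trans hd hle2; rewrite lte_fin => /(lt_le_trans)/(_ hle).
  by rewrite ltxx.
case: (process_spec g0 p1) => es [esW [sW1 sF1] es_e [r1 w1 r1le] c1].
case: (process_spec g0 p2) => et [etW [sW2 sF2] et_e [r2 w2 r2le] c2].
have esW' : es \in W1 by apply: (fintype.subsetP sW2).
have stnot : (s, t) \notin Sr0.
  apply/negP => st0; apply: (nowalk 0).
    apply: walk_step; right; right; split => //; left; by rewrite /H inE st0.
  by apply: mulr_ge0 => //; apply: ltW.
have Lne : L es != L et.
  apply/eqP => eq; apply: (nowalk (r1 + (0 + r2))).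
    apply: walk_cat; first exact: (walk_mono (finset.sub0set _) w1).
    apply: walk_cat; first exact: (I1 _ _ eq).
    apply: walk_rev; exact: (walk_mono (finset.sub0set _) w2).
  move: gb r1le r2le; rewrite /g; set b := beta * _; set gg := gamma * _; lra.
set M := [set L s; L t; L es; L et].
set L' := fun x => if L x \in M then L s else L x.
have sub1 : Sf0 \subset Sf1 by apply: fintype.subset_trans sF2.
have inH' : forall x y, ((x, y) \in Sr1 :|: Sf1) -> walk E c (Sr1 :|: Sf1) y x 0.
  move=> x y h; apply: walk_step; right; right; split => //; by right.
have toS : forall x, L x \in M -> walk E c (Sr1 :|: Sf1) x s 0.
  have ts : walk E c (Sr1 :|: Sf1) t s 0.
    by apply: inH'; rewrite eSr !inE eqxx.
  have HH : H \subset Sr1 :|: Sf1.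
    by rewrite eSr; apply: finset.setUSS => //; apply: finset.subsetUr.
  have stp : forall x m, walk E c (Sr1 :|: Sf1) m s 0 -> L x = L m ->
      walk E c (Sr1 :|: Sf1) x s 0.
    move=> x m hm eq; apply: walk_cat0 hm; apply: (walk_mono HH); exact: I1 eq.
  have ess : walk E c (Sr1 :|: Sf1) es s 0.
    case: es_e => [->|h]; first exact: walk_nil.
    by apply: inH'; rewrite inE (fintype.subsetP sF2 _ h) orbT.
  have ets : walk E c (Sr1 :|: Sf1) et s 0.
    apply: walk_cat0 ts.
    case: et_e => [->|h]; first exact: walk_nil.
    by apply: inH'; rewrite inE h orbT.
  move=> x; rewrite !inE => /ssrbool.orP [/ssrbool.orP [/ssrbool.orP [/eqP eq|/eqP eq]|/eqP eq]|/eqP eq].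
  - exact: stp (walk_nil _ _ _ _) eq.
  - exact: stp ts eq.
  - exact: stp ess eq.
  - exact: stp ets eq.
set A := L @: W1.
have k1 : (#|L' @: W1| <= 1 + #|A :\: M|)%N.
  apply: leq_trans (_ : #|L s |: (A :\: M)| <= _)%N; last first.
    by rewrite cardsU1; case: (_ \notin _).
  apply: subset_leq_card; apply/fintype.subsetP => _ /imsetP [x xW ->].
  rewrite /L' !inE; case: ifP => h; first by rewrite eqxx.
  by rewrite h /= orbC; apply/ssrbool.orP; left; apply: imset_f.
have k2 : (2 <= #|A :&: M|)%N.
  have : [set L es; L et] \subset A :&: M.
    apply/fintype.subsetP => z; rewrite !inE => /ssrbool.orP [] /eqP ->; rewrite imset_f //= !eqxx ?orbT //.
  by move/subset_leq_card; rewrite cards2 Lne.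
have k3 := cardsID M A.
have k4 : (#|A| <= #|L @: W0| + #|W1 :\: W0|)%N.
  apply: leq_trans (_ : #|L @: W0 :|: L @: (W1 :\: W0)| <= _)%N.
    apply: subset_leq_card; apply/fintype.subsetP => _ /imsetP [x xW ->].
    rewrite inE; case xW0: (x \in W0); first by rewrite imset_f.
    by rewrite orbC imset_f // inE xW0.
  by rewrite cardsU; apply: leq_trans (leq_subr _ _) _; apply: leq_add => //; apply: leq_imset_card.
have k5 := cardsID W0 W1.
have k6 : W1 :&: W0 = W0 by apply/finset.setIidPr; apply: fintype.subset_trans sW2.
rewrite k6 in k5.
have k7 : #|Sr1| = (#|Sr0| + 1)%N by rewrite eSr cardsU1 stnot addn1.
have [fin1 fin2] : (#|Sr1| + #|L' @: W1| <= #|W1|)%N /\ (#|Sf1| + #|L' @: W1| <= #|Sr1|)%N.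
  exact: (arith I2 I3 c1 c2 k1 k2 k3 k4 k5 k7).
exists L'; split => //.
- move=> x y; rewrite /L'.
  case: ifP => hx; case: ifP => hy.
  + move=> _; apply: walk_cat0; [exact: toS| apply: walk_rev; exact: toS].
  + by move=> eq; move: hy; rewrite -eq !inE eqxx.
  + by move=> eq; move: hx; rewrite eq !inE eqxx.
  + move=> eq; apply: (walk_mono _ (I1 _ _ eq)).
    by rewrite eSr; apply: finset.setUSS => //; apply: finset.subsetUr.
Qed.
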